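(* Let $F\colon X\hookrightarrow Y$ be an injective linear map of finite-dimensional vector spaces over a non-Archimedean local field $\mathbb{F}$; identify $X$ with its image in $Y$ and let $c=\dim Y-\dim X$. Let $\xi\in C(Gr_k^X,\mathcal{L}_k^X)\otimes D(X)^*$ and $E\in Gr_{k+c}^Y$. If $Y\ne E+X$ then $(F_*\xi)(E)=0$.
   Context: For a finite-dimensional space $W$, $D(W)$ is the one-dimensional space of $\mathbb{C}$-valued Lebesgue measures on $W$, with canonical isomorphisms $D(W)\cong D(K)\otimes D(W/K)$ for subspaces $K$, and $D(W)^*\cong D(W^\vee)$ (the dual of a non-vanishing $\mu$ goes to $\mu^{-1}$, defined by $\mu^{-1}(\Lambda^\vee)=1/\mu(\Lambda)$ for all lattices $\Lambda\subset W$, $\Lambda^\vee=\{f:f(\Lambda)\subset\mathcal{O}\}$). For linear $T\colon A\to B$ with $\dim A=\dim B$ and $\mu\in D(B)$, $T^*\mu$ is the measure $S\mapsto\mu(T(S))$ ($0$ if $T$ is not invertible). $Gr_k^V$ is the Grassmannian, $\mathcal{L}_k^V$ the line bundle with fiber $D(E)$ over $E$, and $C(Gr_k^V,\mathcal{L}_k^V)$ its Banach space of continuous sections. Pull-back of sections: for linear $G\colon A\to B$, $(G^*f)(E)=(G|_E)^*(f(G(E)))$ if $\dim G(E)=\dim E$, else $0$. Fourier transform: for $E\subset V$ ($\dim V=n$) with annihilator $E^\perp\subset V^\vee$, let $a_E\colon D(E)\to D(E^\perp)\otimes D(V^\vee)^*$ be the composite $D(E)\cong D(E^\vee)^*=D(V^\vee/E^\perp)^*\cong(D(V^\vee)\otimes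 D(E^\perp)^* )^*\cong D(E^\perp)\otimes D(V^\vee)^*$, and $\mathcal{F}_V\colon C(Gr_i^V,\mathcal{L}_i^V)\to C(Gr_{n-i}^{V^\vee},\mathcal{L}_{n-i}^{V^\vee})\otimes D(V^\vee)^*$, $(\mathcal{F}_V\phi)(E^\perp)=a_E(\phi(E))$; it is an isomorphism. Push-forward: for linear $F\colon X\to Y$ with dual $F^\vee\colon Y^\vee\to X^\vee$, $F_*:=\mathcal{F}_{Y^\vee}\circ(F^\vee)^*\circ\mathcal{F}_{X^\vee}^{-1}\colon C(Gr_k^X,\mathcal{L}_k^X)\otimes D(X)^*\to C(Gr_{k-\dim X+\dim Y}^Y,\mathcal{L}^Y_{k-\dim X+\dim Y})\otimes D(Y)^*$ (using $X^{\vee\vee}=X$, $D(X^\vee)^*=D(X)$ etc.). *)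

(* Defs.v *)
From HB Require Import structures.
From mathcomp Require Import all_boot all_order all_algebra.
From mathcomp Require Import complex.
From mathcomp Require Import boolp classical_sets reals.
From Stdlib Require Import ClassicalEpsilon.

Set Implicit Arguments.
Unset Strict Implicit.
Unset Printing Implicit Defensive.

Import Order.TTheory GRing.Theory Num.Theory.
Local Open Scope ring_scope.
Local Open Scope classical_set_scope.

Section LocalField.
Variables (R : realType) (K : fieldType) (abs : K -> R).

(* A non-Archimedean local field: a field complete for a non-trivial discrete
   non-Archimedean absolute value, with finite residue field. *)
Definition nonarch_local_field : Prop :=
  (forall x, abs x = 0 <-> x = 0) /\
  [/\ (forall x y, abs (x * y) = abs x * abs y),
      (forall x y, abs (x + y) <= Num.max (abs x) (abs y)),
      (exists p : K, (0 < abs p < 1) /\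
         forall x, x != 0 -> exists z : int, abs x = abs p ^ z),
      (exists s : seq K, (forall y, y \in s -> abs y <= 1) /\
         forall x, abs x <= 1 -> exists y, y \in s /\ abs (x - y) < 1) &
      (forall u : nat -> K,
         (forall e : R, 0 < e -> exists N, forall m n, (N <= m)%N -> (N <= n)%N ->
                abs (u m - u n) < e) ->
         exists l, forall e : R, 0 < e -> exists N, forall n, (N <= n)%N ->
                abs (u n - l) < e)].
End LocalField.

Section Measures.
Variables (R : realType) (K : fieldType) (abs : K -> R).
Local Notation C := R[i].

(* Lattices (compact open O-submodules spanning S, O = {|x| <= 1}) in a
   subspace S of an ambient finite-dimensional space W, as subsets of W:
   the O-span of a K-basis of S. *)
Definition lattice (W : vectType K) (S : {vspace W}) (L : set W) : Prop :=
  exists b : seq W, basis_of S b /\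
    L = [set v | exists a : 'I_(size b) -> K,
                   (forall i, abs (a i) <= 1) /\ v = \sum_i a i *: b`_i].

Definition lindex (W : vectType K) (L L' : set W) (n : nat) : Prop :=
  exists s : seq W, [/\ size s = n,
    (forall i, (i < n)%N -> L s`_i),
    (forall i j, (i < n)%N -> (j < n)%N -> L' (s`_i - s`_j) -> i = j) &
    (forall x, L x -> exists2 i, (i < n)%N & L' (x - s`_i))].

(* D(S): C-valued Lebesgue (Haar) measures on the subspace S, recorded by their
   values on lattices (normalised to 0 on non-lattice subsets). *)
Definition meas (W : vectType K) (S : {vspace W}) (mu : set W -> C) : Prop :=
  (forall L, ~ lattice S L -> mu L = 0) /\
  (forall L L' n, lattice S L -> lattice S L' -> L' `<=` L -> lindex L L' n ->
      mu L = n%:R * mu L').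

Definition mzero (W : Type) : set W -> C := fun _ => 0.
Arguments mzero W : clear implicits.

Definition dual (V : vectType K) := 'Hom(V, K^o).

Definition annV (V : vectType K) (U : {vspace V}) : {vspace dual V} :=
  lker (linfun (fun f : dual V => (f \o projv U)%VF)).

Definition annD (V : vectType K) (E : {vspace dual V}) : {vspace V} :=
  (\bigcap_(i < \dim E) lker (vbasis E)`_i)%VS.

Definition subdual (V : vectType K) (E : {vspace dual V}) := 'Hom(subvs_of E, K^o).

(* the surjection V -> E^dual, with kernel annD E (identifies V/E^perp = E^dual) *)
Definition resE (V : vectType K) (E : {vspace dual V}) (v : V) : subdual E :=
  linfun (fun e : subvs_of E => (vsval e : dual V) v).
Arguments resE {V} E v.

Definition dualL (V : vectType K) (E : {vspace dual V}) (L : set (dual V))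
  : set (subdual E) :=
  [set f | forall e, L e -> abs (f (vsproj E e)) <= 1].
Arguments dualL {V} E L.

Definition cscale (W : Type) (c : C) (m : set W -> C) : set W -> C :=
  fun S => c * m S.

Definition choose_fun (A B : Type) (b : B) (P : (A -> B) -> Prop) : A -> B :=
  epsilon (inhabits (fun _ => b)) P.

(* a_E : D(E) -> D(E^perp) (x) D(V)^*  (the latter realised as linear maps
   D(V) -> D(E^perp)), for E <= V^dual and E^perp <= V^dual^dual = V.
   It is the composite
     D(E) = D(E^dual)^* = D(V/E^perp)^* = (D(V) (x) D(E^perp)^* )^*
          = D(E^perp) (x) D(V)^*,
   where D(E) = D(E^dual)^* sends mu to tau |-> mu(L) tau(L^dual) (any lattice
   L of E; this is the iso sending nu^{-1} to the dual vector of nu), and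
   D(V) = D(E^perp) (x) D(V/E^perp) sends sigma (x) tau to
   Lam |-> sigma(Lam /\ E^perp) tau(image of Lam).  Unwinding, a_E(mu)(rho) is
   the unique element sigma' of D(E^perp) such that
   sigma' = (mu(L) tau(L^dual)) sigma  whenever rho = sigma (x) tau, sigma <> 0. *)
Definition aE (V : vectType K) (E : {vspace dual V}) (mu : set (dual V) -> C)
  (rho : set V -> C) : set V -> C :=
  choose_fun 0 (fun s : set V -> C =>
    meas (annD E) s /\
    forall (sigma : set V -> C) (tau : set (subdual E) -> C) (L : set (dual V)),
      meas (annD E) sigma -> sigma <> mzero V ->
      meas (fullv : {vspace subdual E}) tau -> lattice E L ->
      (forall Lam, lattice (fullv : {vspace V}) Lam ->
         rho Lam = sigma (Lam `&` [set v | v \in annD E]) * tau (resE E @` Lam)) ->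
      s = cscale (mu L * tau (dualL E L)) sigma).

(* sections of L_k^V over Gr_k^V (values off Gr_k are normalised to 0) *)
Definition section (V : vectType K) (k : nat) (f : {vspace V} -> set V -> C) : Prop :=
  forall U, if \dim U == k then meas U (f U) else f U = mzero V.

(* sections of L_k^V (x) D(V)^*, the fibre D(U) (x) D(V)^* realised as
   C-linear maps D(V) -> D(U) *)
Definition tsection (V : vectType K) (k : nat)
  (g : {vspace V} -> (set V -> C) -> set V -> C) : Prop :=
  forall U, if \dim U == k then
     (forall rho, meas (fullv : {vspace V}) rho -> meas U (g U rho)) /\
     (forall (c : C) rho1 rho2, meas (fullv : {vspace V}) rho1 ->
        meas (fullv : {vspace V}) rho2 ->
        g U (fun S => c * rho1 S + rho2 S) = (fun S => c * g U rho1 S + g U rho2 S))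
  else forall rho, meas (fullv : {vspace V}) rho -> g U rho = mzero V.

(* Fourier transform F_{V^dual}: sections over Gr_i(V^dual) ->
   sections over Gr_{n-i}(V) (x) D(V)^*  (using V^dual^dual = V):
   (F phi)(E^perp) = a_E(phi(E)). *)
Definition fourier (V : vectType K) (i : nat)
  (phi : {vspace dual V} -> set (dual V) -> C) :
  {vspace V} -> (set V -> C) -> set V -> C :=
  fun U rho => if \dim U == (\dim (fullv : {vspace V}) - i)%N
               then aE (annV U) (phi (annV U)) rho else mzero V.

Definition fourier_inv (V : vectType K) (i : nat)
  (xi : {vspace V} -> (set V -> C) -> set V -> C) :
  {vspace dual V} -> set (dual V) -> C :=
  fun E => if \dim E == i then
    choose_fun 0 (fun mu : set (dual V) -> C => meas E mu /\
       forall rho, meas (fullv : {vspace V}) rho -> aE E mu rho = xi (annD E) rho)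
  else mzero (dual V).

Definition pullback (A B : vectType K) (G : 'Hom(A, B))
  (f : {vspace B} -> set B -> C) : {vspace A} -> set A -> C :=
  fun E => if \dim (G @: E)%VS == \dim E
           then (fun S => f (G @: E)%VS ((fun a => G a) @` S))
           else mzero A.

Definition dualmap (X Y : vectType K) (F : 'Hom(X, Y)) : 'Hom(dual Y, dual X) :=
  linfun (fun g : dual Y => (g \o F)%VF).

(* push-forward F_* = F_{Y^dual} o (F^dual)^* o F_{X^dual}^{-1} on
   sections of L_k^X (x) D(X)^*, landing in sections of
   L_{k - dim X + dim Y}^Y (x) D(Y)^* *)
Definition pushforward (X Y : vectType K) (F : 'Hom(X, Y)) (k : nat)
  (xi : {vspace X} -> (set X -> C) -> set X -> C) :
  {vspace Y} -> (set Y -> C) -> set Y -> C :=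
  let i := (\dim (fullv : {vspace X}) - k)%N in
  fourier i (pullback (dualmap F) (fourier_inv i xi)).

End Measures.
Arguments mzero {R} W.

(* Main.v *)
Require Import Defs.
From HB Require Import structures.
From mathcomp Require Import all_boot all_order all_algebra.
From mathcomp Require Import complex.
From mathcomp Require Import boolp classical_sets reals.
From mathcomp Require Import ring.
From Stdlib Require Import ClassicalEpsilon.

Set Implicit Arguments.
Unset Strict Implicit.
Unset Printing Implicit Defensive.

Import Order.TTheory GRing.Theory Num.Theory.
Local Open Scope ring_scope.
Local Open Scope classical_set_scope.

Lemma linfunE' (K : fieldType) (aT rT : vectType K) (f : aT -> rT) :
  linear f -> forall v, linfun f v = f v.
Proof.
move=> lf v.
pose ff : {linear aT -> rT} := HB.pack f (GRing.isLinear.Build _ _ _ _ f lf).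
exact: (lfunE ff v).
Qed.

Section Abs.
Variables (R : realType) (K : fieldType) (abs : K -> R).
Hypothesis hK : nonarch_local_field abs.

Lemma abs0 : abs 0 = 0. Proof. by case: hK => h _; apply/h. Qed.
Lemma abs_eq0 x : (abs x == 0) = (x == 0).
Proof. by case: hK => h _; apply/eqP/eqP => /h. Qed.
Lemma absM x y : abs (x * y) = abs x * abs y. Proof. by case: hK => _ []. Qed.
Lemma abs_ultra x y : abs (x + y) <= Num.max (abs x) (abs y). Proof. by case: hK => _ []. Qed.
Lemma abs_disc : exists p : K, (0 < abs p < 1) /\
         forall x, x != 0 -> exists z : int, abs x = abs p ^ z.
Proof. by case: hK => _ []. Qed.
Lemma abs_res : exists s : seq K, (forall y, y \in s -> abs y <= 1) /\
         forall x, abs x <= 1 -> exists y, y \in s /\ abs (x - y) < 1.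
Proof. by case: hK => _ []. Qed.

Lemma abs_ge0 x : 0 <= abs x.
Proof.
have [->|x0] := eqVneq x 0; first by rewrite abs0.
have [p [/andP[p0 p1] hp]] := abs_disc.
have [z ->] := hp x x0.
by apply: ltW; apply: exprz_gt0.
Qed.

Lemma abs1 : abs 1 = 1.
Proof.
have h := absM 1 1; rewrite mulr1 in h.
have n0 : abs 1 != 0 by rewrite abs_eq0 oner_eq0.
by apply: (mulfI n0); rewrite -h mulr1.
Qed.

Lemma absN1 : abs (-1) = 1.
Proof.
apply/eqP; rewrite -(@eqrXn2 _ 2) ?abs_ge0 ?ler01 //.
by rewrite expr2 -absM mulrNN mulr1 abs1 expr1n.
Qed.

Lemma absN x : abs (- x) = abs x.
Proof. by rewrite -mulN1r absM absN1 mul1r. Qed.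

Lemma absB x y : abs (x - y) = abs (y - x).
Proof. by rewrite -absN opprB. Qed.

Lemma absV x : abs (x^-1) = (abs x)^-1.
Proof.
have [->|x0] := eqVneq x 0; first by rewrite invr0 abs0 invr0.
have h := absM x x^-1; rewrite divff // abs1 in h.
have ax : abs x != 0 by rewrite abs_eq0.
by apply: (mulfI ax); rewrite -h divff.
Qed.

Lemma absD_le1 x y : abs x <= 1 -> abs y <= 1 -> abs (x + y) <= 1.
Proof.
move=> hx hy; apply: le_trans (abs_ultra x y) _.
by rewrite ge_max hx hy.
Qed.

Lemma absM_le1 x y : abs x <= 1 -> abs y <= 1 -> abs (x * y) <= 1.
Proof.
move=> hx hy; rewrite absM; have := ler_pM (abs_ge0 x) (abs_ge0 y) hx hy.
by rewrite mulr1.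
Qed.

End Abs.

Section Val.
Variables (R : realType) (K : fieldType) (abs : K -> R).
Hypothesis hK : nonarch_local_field abs.
Variable p : K.
Hypothesis hp : (0 < abs p < 1) /\ forall x, x != 0 -> exists z : int, abs x = abs p ^ z.

Lemma absp_gt0 : 0 < abs p. Proof. by case: hp => /andP[]. Qed.
Lemma absp_lt1 : abs p < 1. Proof. by case: hp => /andP[]. Qed.
Lemma p_neq0 : p != 0.
Proof. by rewrite -(abs_eq0 hK); apply: lt0r_neq0 absp_gt0. Qed.

Lemma absX x n : abs (x ^+ n) = abs x ^+ n.
Proof. elim: n => [|n IH]; first by rewrite !expr0 (abs1 hK). by rewrite !exprS (absM hK) IH. Qed.

Lemma val_lt1 x : abs x < 1 -> exists d, x = p * d /\ abs d <= 1.
Proof.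
move=> hx; exists (p^-1 * x); split; first by rewrite mulrA divff ?p_neq0 ?mul1r.
have [->|x0] := eqVneq x 0; first by rewrite mulr0 (abs0 hK) ler01.
have [z hz] := hp.2 x x0.
rewrite (absM hK) (absV hK) // ler_pdivrMl ?absp_gt0 // mulr1.
move: hx; rewrite hz; case: z {hz} => m /=.
- case: m => [|m]; first by rewrite expr0z ltxx.
  move=> _; rewrite -exprnP exprS.
  have := ler_wpM2l (ltW absp_gt0) (exprn_ile1 m (abs_ge0 hK p) (ltW absp_lt1)).
  by rewrite mulr1.
- move=> h; exfalso; have {}h : (abs p ^+ m.+1)^-1 < 1 := h.
  have h1 : abs p ^+ m.+1 <= 1 by apply: exprn_ile1; rewrite ?(abs_ge0 hK) ?ltW ?absp_lt1.
  have h2 : 1 <= (abs p ^+ m.+1)^-1 by rewrite invr_ge1 ?exprn_gt0 ?absp_gt0 ?unitfE ?expf_neq0 ?lt0r_neq0 ?absp_gt0.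
  by move: (le_lt_trans h2 h); rewrite ltxx.
Qed.

Lemma val_bound c : exists N, forall N', (N <= N')%N -> abs (p ^+ N' * c) <= 1.
Proof.
have [->|c0] := eqVneq c 0; first by exists 0%N => N' _; rewrite mulr0 (abs0 hK) ler01.
have [z hz] := hp.2 c c0.
exists `|z|%N => N' hN.
rewrite (absM hK) absX hz.
have u : abs p \is a GRing.unit by rewrite unitfE lt0r_neq0 ?absp_gt0.
rewrite exprnP -exprzDr //.
have h0 : 0 <= (N'%:Z + z).
  apply: le_trans (_ : `|z|%N%:Z + z <= _); last by rewrite lerD2r lez_nat.
  by rewrite abszE -[X in _ <= _ + X]opprK subr_ge0 ler_normr lexx orbT.
rewrite -(gez0_abs h0) -exprnP; apply: exprn_ile1; rewrite ?(abs_ge0 hK) ?ltW ?absp_lt1 //.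
Qed.

End Val.

Section Ospan.
Variables (R : realType) (K : fieldType) (abs : K -> R).
Hypothesis hK : nonarch_local_field abs.
Variable V : vectType K.

Fixpoint ospan (s : seq V) : set V :=
  if s is x :: s' then [set v | exists c w, abs c <= 1 /\ ospan s' w /\ v = c *: x + w]
  else [set 0].

Lemma ospan0 s : ospan s 0.
Proof.
elim: s => [|x s IH] //=; exists 0, 0; split; rewrite ?(abs0 hK) ?ler01 //.
by rewrite scale0r addr0.
Qed.

Lemma ospanD s u v : ospan s u -> ospan s v -> ospan s (u + v).
Proof.
elim: s u v => [|x s IH] u v /=; first by move=> -> ->; rewrite addr0.
move=> [c [w [hc [hw ->]]]] [c' [w' [hc' [hw' ->]]]].
exists (c + c'), (w + w'); split; first exact: absD_le1.
split; first exact: IH.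
by rewrite scalerDl addrACA.
Qed.

Lemma ospanZ s a v : abs a <= 1 -> ospan s v -> ospan s (a *: v).
Proof.
move=> ha; elim: s v => [|x s IH] v /=; first by move=> ->; rewrite scaler0.
move=> [c [w [hc [hw ->]]]]; exists (a * c), (a *: w); split; first exact: absM_le1.
by split; [exact: IH | rewrite scalerDr scalerA].
Qed.

Lemma ospanN s v : ospan s v -> ospan s (- v).
Proof. by move=> h; rewrite -scaleN1r; apply: ospanZ => //; rewrite (absN1 hK). Qed.

Lemma ospanB s u v : ospan s u -> ospan s v -> ospan s (u - v).
Proof. by move=> hu hv; apply: ospanD => //; apply: ospanN. Qed.

Lemma ospan_sum s I (r : seq I) (P : pred I) (F : I -> V) :
  (forall i, P i -> ospan s (F i)) -> ospan s (\sum_(i <- r | P i) F i).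
Proof.
move=> h; elim/big_rec: _ => [|i x Pi hx]; first exact: ospan0.
by apply: ospanD => //; apply: h.
Qed.

Lemma ospan_mem s x : x \in s -> ospan s x.
Proof.
elim: s => [|y s IH] //= ; rewrite inE => /orP[/eqP ->|hx].
  by exists 1, 0; rewrite (abs1 hK) lexx scale1r addr0; split => //; split => //; apply: ospan0.
by exists 0, x; rewrite (abs0 hK) ler01 scale0r add0r; split => //; split => //; apply: IH.
Qed.

Lemma ospan_sub s t : (forall x, x \in s -> ospan t x) -> ospan s `<=` ospan t.
Proof.
elim: s => [|y s IH] h v /=; first by move=> ->; apply: ospan0.
move=> [c [w [hc [hw ->]]]]; apply: ospanD; first by apply: ospanZ => //; apply: h; rewrite inE eqxx.
by apply: IH => // x hx; apply: h; rewrite inE hx orbT.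
Qed.

Lemma ospan_eq s t : (forall x, x \in s -> ospan t x) -> (forall x, x \in t -> ospan s x) ->
  ospan s = ospan t.
Proof. by move=> h1 h2; apply/seteqP; split; apply: ospan_sub. Qed.

Lemma ospan_span s v : ospan s v -> v \in <<s>>%VS.
Proof.
elim: s v => [|x s IH] v /=; first by move=> ->; rewrite mem0v.
move=> [c [w [hc [hw ->]]]]; rewrite span_cons; apply: memv_add; last exact: IH.
by rewrite memvZ // memv_line.
Qed.

Lemma ospan_cat s t v : ospan (s ++ t) v <-> exists a b, [/\ ospan s a, ospan t b & v = a + b].
Proof.
elim: s v => [|x s IH] v /=.
  by split; [move=> h; exists 0, v; rewrite add0r | move=> [a [b [-> hb ->]]]; rewrite add0r].
split.
  move=> [c [w [hc [/IH [a [b [ha hb ->]]] ->]]]].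
  by exists (c *: x + a), b; split => //; [exists c, a | rewrite addrA].
move=> [a [b [[c [w [hc [hw ->]]]] hb ->]]].
exists c, (w + b); split => //; split; last by rewrite addrA.
by apply/IH; exists w, b.
Qed.

Lemma ospan_setE (b : seq V) :
  [set v | exists a : 'I_(size b) -> K, (forall i, abs (a i) <= 1) /\ v = \sum_i a i *: b`_i]
  = ospan b.
Proof.
elim: b => [|x s IH] /=.
  apply/seteqP; split => v /=; first by move=> [a [_ ->]]; rewrite big_ord0.
  by move=> ->; exists (fun _ => 0); split; [case | rewrite big_ord0].
apply/seteqP; split => v /=.
  move=> [a [ha ->]]; rewrite big_ord_recl /=.
  exists (a ord0), (\sum_(i < size s) a (lift ord0 i) *: s`_i); split => //; split => //.
  by rewrite -IH; exists (fun i => a (lift ord0 i)).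
move=> [c [w [hc [hw ->]]]]; move: hw; rewrite -IH => -[a' [ha' ->]].
exists (fun i : 'I_(size s).+1 => if unlift ord0 i is Some j then a' j else c); split.
  by move=> i; case: (unlift ord0 i).
by rewrite big_ord_recl /= unlift_none; congr (_ + _); apply: eq_bigr => i _; rewrite liftK.
Qed.

Lemma latticeE (S : {vspace V}) L : lattice abs S L <-> exists b, basis_of S b /\ L = ospan b.
Proof.
split; move=> [b [hb ->]]; exists b; split => //; first by rewrite ospan_setE.
by rewrite ospan_setE.
Qed.

End Ospan.

Section OspanMap.
Variables (R : realType) (K : fieldType) (abs : K -> R).
Hypothesis hK : nonarch_local_field abs.
Variable V : vectType K.
Local Notation ospan := (ospan abs).

Lemma ospan_map (W : vectType K) (f : V -> W) s :
  (forall a x y, f (a *: x + y) = a *: f x + f y) ->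
  f @` ospan s = ospan (map f s).
Proof.
move=> lf.
have f0 : f 0 = 0.
  by have := lf 1 0 0; rewrite !scale1r addr0 => /eqP; rewrite -subr_eq0 opprD addrA subrr add0r oppr_eq0 => /eqP.
elim: s => [|x s IH] /=.
  by apply/seteqP; split => v /=; [move=> [u -> <-] | move=> ->; exists 0].
apply/seteqP; split => v /=.
  move=> [u [c [w [hc [hw ->]]]] <-]; exists c, (f w); split => //; split; last exact: lf.
  by rewrite -IH; exists w.
move=> [c [w [hc [hw ->]]]]; move: hw; rewrite -IH => -[u hu <-].
by exists (c *: x + u); [exists c, u | rewrite lf].
Qed.

End OspanMap.

Section Index.
Variables (R : realType) (K : fieldType) (abs : K -> R).
Variable V : vectType K.

Definition covers (L L' : set V) (s : seq V) :=
  (forall x, x \in s -> L x) /\ (forall x, L x -> exists2 y, y \in s & L' (x - y)).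

Definition subgrp (L : set V) := L 0 /\ forall x y, L x -> L y -> L (x - y).

Lemma subgrpN L x : subgrp L -> L x -> L (- x).
Proof. by move=> [h0 hB] hx; rewrite -sub0r; apply: hB. Qed.

Lemma subgrpD L x y : subgrp L -> L x -> L y -> L (x + y).
Proof. by move=> hL hx hy; rewrite -[y]opprK; apply: hL.2 => //; apply: subgrpN. Qed.

Lemma covers_weak L L' L'' s : L' `<=` L'' -> covers L L' s -> covers L L'' s.
Proof. by move=> h [h1 h2]; split => // x /h2 [y hy /h]; exists y. Qed.

Lemma covers_trans A B C s t : B `<=` A -> (forall x y, A x -> A y -> A (x + y)) ->
  covers A B s -> covers B C t -> covers A C [seq y + z | y <- s, z <- t].
Proof.
move=> BA hA [s1 s2] [t1 t2]; split.
  by move=> x /allpairsP [[y z] /= [hy hz ->]]; apply: hA; [apply: s1 | apply: BA; apply: t1].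
move=> x /s2 [y hy /t2 [z hz hC]]; exists (y + z); first by apply/allpairsP; exists (y, z).
by rewrite opprD addrA.
Qed.

Lemma lindex_of_covers L L' s : subgrp L' -> covers L L' s -> exists n, @lindex K V L L' n.
Proof.
move=> hL' [s1 s2].
have [t [ts tpw tc]] : exists t : seq V, [/\ {subset t <= s},
    (forall i j, (i < size t)%N -> (j < size t)%N -> L' (t`_i - t`_j) -> i = j) &
    (forall y, y \in s -> exists2 z, z \in t & L' (y - z))].
  elim: s {s1 s2} => [|x s [t [ts tpw tc]]]; first by exists [::]; split.
  have [[z zt hz]|nz] := pselect (exists2 z, z \in t & L' (x - z)).
    exists t; split.
    - by move=> y /ts; rewrite inE => ->; rewrite orbT.
    - exact: tpw.
    - by move=> y; rewrite inE => /orP [/eqP ->|/tc //]; exists z.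
  exists (x :: t); split.
  - by move=> y; rewrite !inE => /orP [->|/ts ->] //; rewrite orbT.
  - move=> [|i] [|j] //= hi hj.
    + by move=> h; exfalso; apply: nz; exists t`_j => //; apply: mem_nth.
    + move=> h; exfalso; apply: nz; exists t`_i; first by apply: mem_nth.
      by rewrite -opprB; apply: subgrpN.
    + by move=> /(tpw _ _ hi hj) ->.
  - move=> y; rewrite inE => /orP [/eqP ->|/tc [z zt hz]].
      by exists x; rewrite ?inE ?eqxx // subrr; case: hL'.
    by exists z => //; rewrite inE zt orbT.
exists (size t), t; split => //.
- by move=> i hi; apply: s1; apply: ts; apply: mem_nth.
- move=> x /s2 [y ys hy]; have [z zt hz] := tc y ys.
  exists (index z t); first by rewrite index_mem.
  rewrite nth_index //.
  by have := subgrpD hL' hy hz; rewrite addrA subrK.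
Qed.

Lemma lindex_gt0 L L' n : L 0 -> @lindex K V L L' n -> (0 < n)%N.
Proof. by move=> h0 [s [_ _ _ /(_ 0 h0) [i hi _]]]; apply: leq_ltn_trans hi. Qed.

End Index.

Section Cover.
Variables (R : realType) (K : fieldType) (abs : K -> R).
Hypothesis hK : nonarch_local_field abs.
Variable V : vectType K.
Variable p : K.
Hypothesis hp : (0 < abs p < 1) /\ forall x, x != 0 -> exists z : int, abs x = abs p ^ z.
Variable rs : seq K.
Hypothesis hrs1 : forall y, y \in rs -> abs y <= 1.
Hypothesis hrs2 : forall x, abs x <= 1 -> exists y, y \in rs /\ abs (x - y) < 1.
Local Notation ospan := (@ospan R K abs V).
Local Notation covers := (@covers K V).
Local Notation ospan0 := (ospan0 hK).
Local Notation ospanD := (ospanD hK).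
Local Notation ospanZ := (ospanZ hK).
Local Notation ospanN := (ospanN hK).
Local Notation ospanB := (ospanB hK).
Local Notation ospan_sum := (ospan_sum hK).
Local Notation ospan_mem := (ospan_mem hK).
Local Notation ospan_sub := (ospan_sub hK).
Local Notation ospan_eq := (ospan_eq hK).

Lemma ospan_subgrp b : subgrp (ospan b).
Proof. by split; [apply: ospan0 | move=> x y; apply: ospanB]. Qed.

Lemma absp_le1 : abs p <= 1. Proof. by apply: ltW; apply: absp_lt1 hp. Qed.
Lemma abspX_le1 N : abs (p ^+ N) <= 1.
Proof. by rewrite (absX hK) exprn_ile1 ?(abs_ge0 hK) ?absp_le1. Qed.

Definition cov (b : seq V) : seq V :=
  foldr (fun x acc => [seq y *: x + z | y <- rs, z <- acc]) [:: 0] b.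

Lemma covers_p b : covers (ospan b) (ospan (map (fun x => p *: x) b)) (cov b).
Proof.
elim: b => [|x b [IH1 IH2]] /=.
  split; first by move=> x; rewrite inE => /eqP ->.
  by move=> x ->; exists 0; rewrite ?inE // subrr.
split.
  move=> v /allpairsP [[y z] /= [hy hz ->]]; exists y, z; split; first exact: hrs1.
  by split => //; apply: IH1.
move=> v [c [w [hc [hw ->]]]].
have [y [hy hcy]] := hrs2 hc.
have [d [hd1 hd2]] := val_lt1 hK hp hcy.
have [z hz hwz] := IH2 w hw.
exists (y *: x + z); first by apply/allpairsP; exists (y, z).
exists d, (w - z); split => //; split => //.
by rewrite scalerA mulrC -hd1 opprD addrACA -scalerBl.
Qed.

Lemma covers_pN b N : exists s, covers (ospan b) (ospan (map (fun x => p ^+ N *: x) b)) s.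
Proof.
elim: N => [|N [s hs]].
  exists [:: 0]; rewrite (_ : map _ b = b); last by rewrite -[RHS]map_id; apply: eq_map => x; rewrite expr0 scale1r.
  by split; [move=> x; rewrite inE => /eqP ->; apply: ospan0 | move=> x hx; exists 0; rewrite ?inE ?subr0].
exists [seq y + z | y <- s, z <- cov (map (fun x => p ^+ N *: x) b)].
apply: covers_trans hs _.
- apply: ospan_sub => x /mapP [y hy ->]; apply: ospanZ => //; first exact: abspX_le1.
  exact: ospan_mem.
- by move=> x y; apply: ospanD.
- rewrite (_ : map (fun x => p ^+ N.+1 *: x) b = map (fun x => p *: x) (map (fun x => p ^+ N *: x) b)); first exact: covers_p.
  by rewrite -map_comp; apply: eq_map => x /=; rewrite scalerA exprS.
Qed.

Lemma span_bound b' v : v \in <<b'>>%VS ->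
  exists N, forall N', (N <= N')%N -> ospan b' (p ^+ N' *: v).
Proof.
elim: b' v => [|x b' IH] v.
  by rewrite span_nil memv0 => /eqP ->; exists 0%N => N' _; rewrite scaler0; apply: ospan0.
rewrite span_cons => /memv_addP [u /vlineP [c ->] [w hw ->]].
have [N1 h1] := val_bound hK hp c.
have [N2 h2] := IH w hw.
exists (maxn N1 N2) => N' hN; rewrite geq_max in hN; case/andP: hN => hN1 hN2.
exists (p ^+ N' * c), (p ^+ N' *: w); split; first exact: h1.
by split; [exact: h2 | rewrite scalerDr scalerA].
Qed.

Lemma comm_bound b b' : {subset b <= <<b'>>%VS} ->
  exists N, ospan (map (fun x => p ^+ N *: x) b) `<=` ospan b'.
Proof.
move=> hb.
suff [N hN] : exists N, forall N', (N <= N')%N -> forall x, x \in b -> ospan b' (p ^+ N' *: x).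
  by exists N; apply: ospan_sub => x /mapP [y hy ->]; apply: hN.
elim: b hb => [|x b IH] hb; first by exists 0%N.
have [N1 h1] := span_bound (hb x (mem_head _ _)).
have [N2 h2] : exists N, forall N', (N <= N')%N -> forall y, y \in b -> ospan b' (p ^+ N' *: y).
  by apply: IH => y hy; apply: hb; rewrite inE hy orbT.
exists (maxn N1 N2) => N' hN y; rewrite geq_max in hN; case/andP: hN => hN1 hN2.
by rewrite inE => /orP [/eqP ->|hy]; [apply: h1 | apply: h2].
Qed.

Lemma fin_index b b' : {subset b <= <<b'>>%VS} -> exists n, lindex (ospan b) (ospan b') n.
Proof.
move=> hb; have [N hN] := comm_bound hb.
have [s hs] := covers_pN b N.
apply: (lindex_of_covers (ospan_subgrp b')).
exact: covers_weak hN hs.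
Qed.

End Cover.

Lemma seq_argmax (T : eqType) (R : realType) (f : T -> R) (s : seq T) :
  s != [::] -> exists2 h, h \in s & forall x, x \in s -> f x <= f h.
Proof.
elim: s => [|y s IH] // _.
have [->|sn] := eqVneq s [::].
  by exists y; rewrite ?mem_head // => x; rewrite inE => /eqP ->.
have [h hs hm] := IH sn.
have [le|lt] := leP (f h) (f y).
  exists y; first exact: mem_head.
  by move=> x; rewrite inE => /orP [/eqP ->//|/hm hx]; apply: le_trans le.
exists h; first by rewrite inE hs orbT.
by move=> x; rewrite inE => /orP [/eqP ->|/hm //]; apply: ltW.
Qed.

Lemma span_vanish (K : fieldType) (V : vectType K) (g : 'Hom(V, K^o)) (b : seq V) v :
  (forall x, x \in b -> g x = 0) -> v \in <<b>>%VS -> g v = 0.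
Proof.
move=> hb hv; have : (<<b>> <= lker g)%VS by apply/span_subvP => x /hb h; rewrite memv_ker h.
by move/subvP/(_ v hv); rewrite memv_ker => /eqP.
Qed.

Section Reduce.
Variables (R : realType) (K : fieldType) (abs : K -> R).
Hypothesis hK : nonarch_local_field abs.
Variable V : vectType K.
Local Notation ospan := (@ospan R K abs V).
Local Notation ospan0 := (ospan0 hK).
Local Notation ospanD := (ospanD hK).
Local Notation ospanZ := (ospanZ hK).
Local Notation ospanN := (ospanN hK).
Local Notation ospanB := (ospanB hK).
Local Notation ospan_sum := (ospan_sum hK).
Local Notation ospan_mem := (ospan_mem hK).
Local Notation ospan_sub := (ospan_sub hK).
Local Notation ospan_eq := (ospan_eq hK).

Lemma span_of_ospan s t : ospan s = ospan t -> <<s>>%VS = <<t>>%VS.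
Proof.
move=> h; apply/eqP; rewrite eqEsubv; apply/andP; split; apply/span_subvP => x hx;
  apply: (ospan_span (abs:=abs)); [rewrite -h | rewrite h]; exact: ospan_mem.
Qed.

Lemma free_of_ospan s t : ospan s = ospan t -> size s = size t -> free t -> free s.
Proof. by move=> h hs; rewrite /free (span_of_ospan h) hs. Qed.

Lemma ospan_cons_eq h s t : ospan s = ospan t -> ospan (h :: s) = ospan (h :: t).
Proof. by move=> /= ->. Qed.

Lemma ospan_perm s t : perm_eq s t -> ospan s = ospan t.
Proof.
by move=> hp; apply: ospan_eq => x hx; apply: ospan_mem; rewrite ?(perm_mem hp) // -(perm_mem hp).
Qed.

Lemma pivot (g : 'Hom(V, K^o)) (b : seq V) :
  (exists2 x, x \in b & g x != 0) ->
  exists h rest, [/\ ospan (h :: rest) = ospan b, size rest = (size b).-1, g h != 0 &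
     forall r, r \in rest -> g r = 0].
Proof.
move=> [x0 hx0 gx0].
have bn : b != [::] by case: b hx0.
have [h hb hm] := seq_argmax (fun x => abs (g x)) bn.
have gh : g h != 0.
  apply/negP => /eqP gh0; have := hm x0 hx0; rewrite gh0 (abs0 hK).
  by rewrite le_eqVlt (abs_eq0 hK) (negPf gx0) /= ltNge (abs_ge0 hK).
set c := fun x => (g x : K) / g h.
have hc : forall x, x \in b -> abs (c x) <= 1.
  move=> x hx; rewrite /c (absM hK) (absV hK) ler_pdivrMr ?mul1r; first exact: hm.
  by rewrite lt0r (abs_eq0 hK) gh (abs_ge0 hK).
exists h, (map (fun x => x - c x *: h) (rem h b)); split.
- rewrite (ospan_perm (perm_to_rem hb)).
  apply: ospan_eq => y.
    rewrite inE => /orP [/eqP ->|/mapP [x hx ->]]; first by apply: ospan_mem; rewrite mem_head.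
    apply: ospanB; first by apply: ospan_mem; rewrite inE hx orbT.
    apply: ospanZ; first by apply: hc; apply: mem_rem hx.
    by apply: ospan_mem; rewrite mem_head.
  rewrite inE => /orP [/eqP ->|hy]; first by apply: ospan_mem; rewrite mem_head.
  rewrite -[y](subrK (c y *: h)); apply: ospanD.
    by apply: ospan_mem; rewrite inE; apply/orP; right; apply/mapP; exists y.
  apply: ospanZ; first by apply: hc; apply: mem_rem hy.
  by apply: ospan_mem; rewrite mem_head.
- by rewrite size_map size_rem.
- exact: gh.
- move=> r /mapP [x hx ->]; rewrite linearB linearZ /= /c.
  by rewrite -[X in _ - X = _]/(_ * _) mulfVK // subrr.
Qed.

Lemma reduce (gs : seq 'Hom(V, K^o)) (b : seq V) :
  exists P Rr, [/\ ospan (P ++ Rr) = ospan b, size (P ++ Rr) = size b,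
    (forall r g, r \in Rr -> g \in gs -> g r = 0) &
    (forall x, x \in <<P>>%VS -> (forall g, g \in gs -> g x = 0) -> x = 0)].
Proof.
elim: gs b => [|g gs IH] b.
  by exists [::], b; split => // x; rewrite span_nil memv0 => /eqP ->.
have [[x0 hx0 gx0]|nz] := pselect (exists2 x, x \in b & g x != 0); last first.
  have [P [Rr [h1 h2 h3 h4]]] := IH b.
  have gb : forall v, v \in <<b>>%VS -> g v = 0.
    move=> v; apply: span_vanish => x hx; case: (eqVneq (g x) 0) => // gx; exfalso; apply: nz; by exists x.
  exists P, Rr; split => //.
    move=> r g'; rewrite inE => hr /orP [/eqP ->|hg]; last exact: h3.
    apply: gb; apply: (ospan_span (abs:=abs)); rewrite -h1; by apply: ospan_mem; rewrite mem_cat hr orbT.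
  by move=> x hx hg; apply: h4 => // g' hg'; apply: hg; rewrite inE hg' orbT.
have [h [rest [e1 e2 e3 e4]]] := pivot (ex_intro2 _ _ x0 hx0 gx0).
have [P [Rr [h1 h2 h3 h4]]] := IH rest.
have grest : forall v, v \in <<rest>>%VS -> g v = 0 by move=> v; apply: span_vanish.
exists (h :: P), Rr; split.
- by rewrite cat_cons -e1; apply: ospan_cons_eq.
- by rewrite /= h2 e2; case: (b) hx0.
- move=> r g'; rewrite inE => hr /orP [/eqP ->|hg]; last exact: h3.
  apply: grest; apply: (ospan_span (abs:=abs)); rewrite -h1; by apply: ospan_mem; rewrite mem_cat hr orbT.
- move=> x; rewrite span_cons => /memv_addP [u /vlineP [c ->] [w hw ->]] hg.
  have gw : g w = 0.
    apply: grest; rewrite -(span_of_ospan h1).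
    have sP : (<<P>> <= <<P ++ Rr>>)%VS by apply: sub_span => y hy; rewrite mem_cat hy.
    exact: (subvP sP).
  have := hg g (mem_head _ _); rewrite linearD linearZ /= gw addr0 => /eqP.
  rewrite mulf_eq0 (negPf e3) orbF => /eqP c0.
  rewrite c0 scale0r add0r in hg *; apply: h4 => // g' hg'; apply: hg; by rewrite inE hg' orbT.
Qed.

End Reduce.

Section Annih.
Variables (K : fieldType) (W : vectType K).

Lemma annih_exists (U : {vspace W}) : U != fullv ->
  exists g : 'Hom(W, K^o), g != 0 /\ forall u, u \in U -> g u = 0.
Proof.
move=> hU.
have [w hw] : exists w, w \notin U.
  case: (pselect (exists w, w \notin U)) => [//|hn]; exfalso.
  move/negP: hU; apply; rewrite eqEsubv subvf /=; apply/subvP => x _.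
  by case: (boolP (x \in U)) => // hx; exfalso; apply: hn; exists x.
set u := w - projv U w.
have u0 : u != 0.
  by apply: contra hw; rewrite subr_eq0 => /eqP ->; apply: memv_proj.
have [i hi] : exists i, coord (vbasis fullv) i u != 0.
  case: (pselect (exists i, coord (vbasis fullv) i u != 0)) => [//|hn]; exfalso.
  move/negP: u0; apply; apply/eqP.
  rewrite (coord_vbasis (memvf u)) big1 // => i _.
  case: (eqVneq (coord (vbasis fullv) i u) 0) => [->|h]; first by rewrite scale0r.
  by exfalso; apply: hn; exists i.
pose f := fun y : W => (coord (vbasis fullv) i (y - projv U y) : K^o).
have lf : linear f.
  move=> a x y; rewrite /f -linearP /= [projv U (_ + _)]linearP /= opprD addrACA scalerBr.
  by [].
exists (@linfun _ W K^o f); split.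
  apply/negP => /eqP h; move/negP: hi; apply.
  by have := linfunE' lf w; rewrite h zero_lfunE /f => <-.
by move=> x hx; rewrite (linfunE' lf) /f projv_id // subrr linear0.
Qed.

End Annih.

Section Dual.
Variables (K : fieldType) (V : vectType K) (Ed : {vspace dual V}).
Local Notation Q := (subdual Ed).
Local Notation pi := (resE Ed).
Local Notation E0 := (annD Ed).

Lemma piE v e : pi v e = (vsval e : dual V) v.
Proof.
rewrite /resE linfunE' // => a x y.
by rewrite linearP /= add_lfunE scale_lfunE.
Qed.

Lemma pi_lin a x y : pi (a *: x + y) = a *: pi x + pi y.
Proof. by apply/lfunP => e; rewrite add_lfunE scale_lfunE !piE linearP. Qed.

Definition pih : 'Hom(V, Q) := linfun pi.
Lemma pihE v : pih v = pi v.
Proof. by rewrite /pih linfunE' // => a x y; rewrite pi_lin. Qed.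

Lemma memE0 v : (v \in E0) <-> forall i : 'I_(\dim Ed), (vbasis Ed)`_i v = 0.
Proof.
rewrite /annD memvE; split.
  by move/subv_bigcapP => h i; have := h i isT; rewrite -memvE memv_ker => /eqP.
by move=> h; apply/subv_bigcapP => i _; rewrite -memvE memv_ker h.
Qed.

Definition evl (v : V) : 'Hom(dual V, K^o) := linfun (fun f : dual V => (f v : K^o)).
Lemma evlE v f : evl v f = f v.
Proof. by rewrite /evl linfunE' // => a x y; rewrite add_lfunE scale_lfunE. Qed.

Lemma memE0_pi v : (v \in E0) = (pi v == 0).
Proof.
apply/idP/idP.
  move=> /memE0 hv; apply/eqP/lfunP => e; rewrite piE zero_lfunE -evlE.
  apply: (span_vanish (b := vbasis Ed)); last by rewrite (span_basis (vbasisP Ed)) subvsP.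
  move=> x /(nthP 0) [i hi <-]; rewrite evlE; move: hi; rewrite size_tuple => hi; exact: (hv (Ordinal hi)).
move=> /eqP h; apply/memE0 => i.
have hf : (vbasis Ed)`_i \in Ed by apply: vbasis_mem; apply: mem_nth; rewrite size_tuple.
by rewrite -(vsprojK hf) -piE h zero_lfunE.
Qed.

Lemma lker_pih : lker pih = E0.
Proof. by apply/vspaceP => v; rewrite memv_ker pihE memE0_pi. Qed.

Lemma pi_surj : limg pih = fullv.
Proof.
case: (eqVneq (limg pih) fullv) => // hn; exfalso.
have [lam [lam0 hlam]] := annih_exists hn.
have hlv : forall v, lam (pi v) = 0.
  by move=> v; apply: hlam; rewrite -pihE memv_img ?memvf.
pose m := \dim Ed.
pose f (i : 'I_m) := (vbasis Ed)`_i.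
have hf : forall i, f i \in Ed by move=> i; apply: vbasis_mem; apply: mem_nth; rewrite size_tuple.
pose w i := vsproj Ed (f i).
pose dd (i : 'I_m) : Q := linfun (fun x : subvs_of Ed => (coord (vbasis Ed) i (vsval x) : K^o)).
have ddE : forall i x, dd i x = coord (vbasis Ed) i (vsval x).
  by move=> i x; rewrite /dd linfunE' // => a y z; rewrite !linearP.
have qdec : forall q : Q, q = \sum_(i < m) q (w i) *: dd i.
  move=> q; apply/lfunP => x; rewrite sum_lfunE.
  rewrite -{1}[x]vsvalK (coord_vbasis (subvsP x)) linear_sum linear_sum /=.
  apply: eq_bigr => i _; rewrite scale_lfunE ddE !linearZ /=; exact: mulrC.
have hsum : \sum_(i < m) lam (dd i) *: f i = 0.
  apply/lfunP => v; rewrite sum_lfunE zero_lfunE; apply: (etrans _ (hlv v)).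
  rewrite [in RHS](qdec (pi v)) linear_sum.
  apply: eq_bigr => i _; rewrite scale_lfunE linearZ /= piE vsprojK //.
  exact: mulrC.
have hz : forall i, lam (dd i) = 0.
  by move: (basis_free (vbasisP Ed)) => /freeP /(_ (fun i => lam (dd i))) ; apply.
move/negP: lam0; apply; apply/eqP/lfunP => q.
rewrite zero_lfunE (qdec q) linear_sum big1 // => i _.
by rewrite linearZ /= hz; exact: mulr0.
Qed.

Lemma pi_onto q : exists v, pi v = q.
Proof.
have : q \in limg pih by rewrite pi_surj memvf.
by case/memv_imgP => v _ ->; exists v; rewrite pihE.
Qed.

End Dual.

Lemma size_basis_of (K : fieldType) (W : vectType K) (U : {vspace W}) X :
  basis_of U X -> size X = \dim U.
Proof. by move=> hb; rewrite -(span_basis hb); move: (basis_free hb) => /eqnP ->. Qed.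

Section Struct.
Variables (R : realType) (K : fieldType) (abs : K -> R).
Hypothesis hK : nonarch_local_field abs.
Variables (V : vectType K) (Ed : {vspace dual V}).
Local Notation Q := (subdual Ed).
Local Notation pi := (resE Ed).
Local Notation E0 := (annD Ed).
Local Notation ospanQ := (@ospan R K abs Q).
Local Notation ospan := (@ospan R K abs V).
Local Notation ospan0 := (ospan0 hK).
Local Notation ospanD := (ospanD hK).
Local Notation ospanZ := (ospanZ hK).
Local Notation ospanB := (ospanB hK).
Local Notation ospan_mem := (ospan_mem hK).
Local Notation ospan_sub := (ospan_sub hK).
Local Notation ospan_eq := (ospan_eq hK).

Lemma dimV_split : \dim (fullv : {vspace V}) = (\dim E0 + \dim (fullv : {vspace Q}))%N.
Proof. by rewrite -(limg_ker_dim (pih Ed) fullv) capfv lker_pih pi_surj. Qed.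

Lemma pi0 v : v \in E0 -> pi v = 0.
Proof. by rewrite memE0_pi => /eqP. Qed.

Lemma map_pih (s : seq V) : map (pih Ed) s = map pi s.
Proof. by apply: eq_map => x; rewrite pihE. Qed.

Lemma lift_struct (t : seq Q) (u r : seq V) :
  basis_of fullv t -> map pi u = t -> basis_of E0 r ->
  [/\ basis_of fullv (u ++ r), pi @` ospan (u ++ r) = ospanQ t &
      ospan (u ++ r) `&` [set v | v \in E0] = ospan r].
Proof.
move=> ht hu hr.
have st : size t = \dim (fullv : {vspace Q}) := size_basis_of ht.
have sr : size r = \dim E0 := size_basis_of hr.
have su : size u = size t by rewrite -hu size_map.
have imgu : ((pih Ed) @: <<u>> = fullv)%VS by rewrite limg_span map_pih hu (span_basis ht).
have capu : (<<u>> :&: lker (pih Ed) = 0)%VS.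
  apply/eqP; rewrite -dimv_eq0; have := limg_ker_dim (pih Ed) <<u>>%VS.
  rewrite imgu -st -su => h; have := dim_span u; rewrite -h.
  by rewrite -{2}[size u]add0n leq_add2r leqn0.
have rE0 : forall x, x \in r -> x \in E0 by move=> x; apply: basis_mem.
split.
- rewrite basisEdim size_cat su st sr addnC -dimV_split leqnn andbT.
  apply/subvP => v _; have : pih Ed v \in ((pih Ed) @: <<u>>)%VS by rewrite imgu memvf.
  case/memv_imgP => x hx hvx.
  have : v - x \in E0 by rewrite -lker_pih memv_ker linearB /= hvx subrr.
  rewrite -(span_basis hr) => hvr.
  by rewrite -[v](subrK x) span_cat addrC; apply: memv_add.
- rewrite (@ospan_map R K abs V Q pi); last by move=> a x y; apply: pi_lin.
  rewrite map_cat hu; apply: ospan_eq => x.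
    rewrite mem_cat => /orP [hx|/mapP [y hy ->]]; first exact: ospan_mem.
    by rewrite pi0 ?rE0 //; apply: ospan0.
  by move=> hx; apply: ospan_mem; rewrite mem_cat hx.
- apply/seteqP; split => v /=.
    move=> [/ospan_cat [a [b [ha hb ->]]] hv].
    have hb0 : b \in E0 by rewrite -(span_basis hr); apply: (ospan_span (abs:=abs)).
    have ha0 : a = 0.
      apply/eqP; rewrite -memv0 -capu memv_cap (ospan_span ha) /= lker_pih.
      by rewrite -[a](addrK b) memvB.
    by rewrite ha0 add0r.
  move=> hv; split; last by rewrite -(span_basis hr); apply: (ospan_span (abs:=abs)).
  by apply/ospan_cat; exists 0, v; rewrite add0r; split => //; apply: ospan0.
Qed.

Lemma lattice_struct (L : set V) : lattice abs (fullv : {vspace V}) L ->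
  exists u r, [/\ basis_of fullv (map pi u), basis_of E0 r & L = ospan (u ++ r)].
Proof.
move=> /latticeE [b [hb ->]].
have [P [Rr [h1 h2 h3 h4]]] := reduce hK (vbasis Ed) b.
have gsE : forall v, (forall g, g \in (vbasis Ed : seq _) -> g v = 0) <-> v \in E0.
  move=> v; rewrite memE0; split => h.
    by move=> i; apply: h; apply: mem_nth; rewrite size_tuple.
  by move=> g /(nthP 0) [i hi <-]; move: hi; rewrite size_tuple => hi; apply: (h (Ordinal hi)).
have fr : free (P ++ Rr) by apply: (free_of_ospan hK h1 h2); apply: basis_free hb.
have sp : <<P ++ Rr>>%VS = fullv by rewrite (span_of_ospan hK h1) (span_basis hb).
have RE0 : forall x, x \in Rr -> x \in E0 by move=> x hx; apply/gsE => g hg; apply: h3.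
have sRE : (<<Rr>> <= E0)%VS by apply/span_subvP => z; apply: RE0.
have hRr : basis_of E0 Rr.
  rewrite basisEfree (catr_free fr) /=; apply/andP; split.
    by apply/span_subvP => x; apply: RE0.
  move: (catr_free fr) => /eqnP <-; apply: dimvS; apply/subvP => v hv.
  have : v \in <<P ++ Rr>>%VS by rewrite sp memvf.
  rewrite span_cat => /memv_addP [x hx [y hy hxy]]; subst v.
  have hyE : y \in E0 by apply: (subvP sRE).
  have -> : x = 0.
    apply: h4 => //; apply/gsE; rewrite -[x](addrK y); exact: memvB hv hyE.
  by rewrite add0r.
exists P, Rr; split => //.
rewrite basisEdim size_map.
have -> : size P = \dim (fullv : {vspace Q}).
  have := dimV_split; rewrite -(size_basis_of hRr) -sp.
  move: fr => /eqnP ->; rewrite size_cat addnC => /eqP; rewrite eqn_add2l => /eqP.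
  by [].
rewrite leqnn andbT; apply/subvP => q _.
have [v <-] := pi_onto q.
have : v \in <<P ++ Rr>>%VS by rewrite sp memvf.
rewrite span_cat => /memv_addP [x hx [y hy ->]].
have hyE : y \in E0 by apply: (subvP sRE).
rewrite -[x]scale1r pi_lin scale1r (pi0 hyE) addr0 -pihE -map_pih -limg_span.
exact: memv_img.
Qed.

End Struct.

Lemma list_lift (A B : eqType) (P : A -> B -> Prop) (s : seq B) :
  (forall t, t \in s -> exists w, P w t) ->
  exists ws, size ws = size s /\ forall j x0 y0, (j < size s)%N -> P (nth x0 ws j) (nth y0 s j).
Proof.
elim: s => [|t s IH] h; first by exists [::].
have [w hw] := h t (mem_head _ _).
have [ws [h1 h2]] := IH (fun t' ht' => h t' (mem_behead (s := t :: s) ht')).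
by exists (w :: ws); split; [rewrite /= h1 | move=> [|j] x0 y0 //= hj; apply: h2].
Qed.

Lemma inj_of_map_uniq (A B : eqType) (f : A -> B) (s : seq A) :
  uniq (map f s) -> {in s &, injective f}.
Proof.
elim: s => [|x s IH] //= /andP [hx hu] y z.
rewrite !inE => /orP [/eqP ->|hy] /orP [/eqP ->|hz] // hf.
- by move: hx; rewrite hf map_f.
- by move: hx; rewrite -hf map_f.
- exact: IH.
Qed.

Section LindexMem.
Variables (K : fieldType) (V : vectType K).

Lemma lindexP (L L' : set V) n : L' 0 ->
  lindex L L' n <-> exists s, [/\ size s = n, uniq s, (forall x, x \in s -> L x),
     (forall x y, x \in s -> y \in s -> L' (x - y) -> x = y) &
     (forall x, L x -> exists2 y, y \in s & L' (x - y))].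
Proof.
move=> h0; split.
  move=> [s [hs h1 h2 h3]]; exists s; split => //.
  - apply/(uniqP 0) => i j; rewrite !inE => hi hj he.
    by apply: h2; rewrite -?hs // he subrr.
  - by move=> x /(nthP 0) [i hi <-]; apply: h1; rewrite -hs.
  - by move=> x y /(nthP 0) [i hi <-] /(nthP 0) [j hj <-] /h2 -> //; rewrite -hs.
  - by move=> x /h3 [i hi hx]; exists s`_i => //; apply: mem_nth; rewrite hs.
move=> [s [hs hu h1 h2 h3]]; exists s; split => //.
- by move=> i hi; apply: h1; apply: mem_nth; rewrite hs.
- move=> i j hi hj /h2 he; apply/eqP; rewrite -(nth_uniq 0 _ _ hu) ?hs //.
  by rewrite he ?mem_nth ?hs.
- move=> x /h3 [y hy hx]; exists (index y s); first by rewrite -hs index_mem.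
  by rewrite nth_index.
Qed.

End LindexMem.

Section Exact.
Variables (K : fieldType) (V W : vectType K).
Variables (L L' : set V) (Z : set V) (pi : V -> W).
Hypothesis hL : subgrp L.
Hypothesis hL' : subgrp L'.
Hypothesis hLL : L' `<=` L.
Hypothesis piB : forall x y, pi (x - y) = pi x - pi y.
Hypothesis piZ : forall v, pi v = 0 <-> Z v.

Lemma pi0' : pi 0 = 0. Proof. by have := piB 0 0; rewrite subr0 subrr. Qed.

Lemma piN v : pi (- v) = - pi v.
Proof. by rewrite -sub0r piB pi0' sub0r. Qed.

Lemma piD x y : pi (x + y) = pi x + pi y.
Proof. by rewrite -{1}[y]opprK piB piN opprK. Qed.

Lemma exact_index a b : lindex (L `&` Z) (L' `&` Z) a -> lindex (pi @` L) (pi @` L') b ->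
  lindex L L' (a * b).
Proof.
have A'0 : (L' `&` Z) 0 by split; [case: hL' | apply/piZ; apply: pi0'].
have T'0 : (pi @` L') 0 by exists 0; [case: hL' | apply: pi0'].
move=> /(lindexP _ _ A'0) [rs [hrs1 hrs2 hrs3 hrs4 hrs5]].
move=> /(lindexP _ _ T'0) [ts [hts1 hts2 hts3 hts4 hts5]].
have [ws [hws1 hws2]] : exists ws, size ws = size ts /\
    forall j x0 y0, (j < size ts)%N -> L (nth x0 ws j) /\ pi (nth x0 ws j) = nth y0 ts j.
  apply: (list_lift (P := fun w t => L w /\ pi w = t)) => t /hts3 [w hw <-].
  by exists w.
have mws : map pi ws = ts.
  apply: (@eq_from_nth _ 0); rewrite size_map // => j hj.
  by rewrite (nth_map 0) // (hws2 j 0 0 _).2 // -hws1.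
have wsL : forall w, w \in ws -> L w.
  by move=> w /(nthP 0) [j hj <-]; apply: (hws2 j 0 0 _).1; rewrite -hws1.
have wsinj : {in ws &, injective pi} by apply: inj_of_map_uniq; rewrite mws.
have ZL : forall x y, Z x -> Z y -> Z (x - y).
  by move=> x y /piZ hx /piZ hy; apply/piZ; rewrite piB hx hy subrr.
have LZ : forall x y, L x -> L y -> L (x + y) by move=> x y; apply: subgrpD.
apply/(lindexP _ _ (proj1 hL')).
exists [seq r + w | r <- rs, w <- ws]; split.
- by rewrite size_allpairs hrs1 hws1 hts1.
- apply: allpairs_uniq => //; first by apply: (map_uniq (f := pi)); rewrite mws.
  move=> [r w] [r' w'] /allpairsP [[r1 w1] /= [hr hw [-> ->]]] /allpairsP [[r2 w2] /= [hr' hw' [-> ->]]] /= he.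
  have hpw : pi w1 = pi w2.
    have := hrs3 _ hr => -[_ /piZ h1]; have := hrs3 _ hr' => -[_ /piZ h2].
    by have := f_equal pi he; rewrite !piD h1 h2 !add0r.
  have hw12 := wsinj _ _ hw hw' hpw.
  by rewrite hw12 in he *; rewrite (addIr _ he).
- move=> z /allpairsP [[r w] /= [hr hw ->]]; apply: LZ; last exact: wsL.
  by case: (hrs3 _ hr).
- move=> z z' /allpairsP [[r1 w1] /= [hr hw ->]] /allpairsP [[r2 w2] /= [hr' hw' ->]] hzz.
  have := hrs3 _ hr => -[_ /piZ h1]; have := hrs3 _ hr' => -[_ /piZ h2].
  have hpw : pi w1 = pi w2.
    apply: hts4; rewrite -?mws ?map_f //.
    by exists (r1 + w1 - (r2 + w2)); rewrite // piB !piD h1 h2 !add0r.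
  have hw12 := wsinj _ _ hw hw' hpw; subst w2.
  rewrite (hrs4 r1 r2) //; split; first by rewrite opprD addrACA subrr addr0 in hzz.
  by apply: ZL; apply/piZ.
- move=> x hx.
  have [t ht [l' hl' hl't]] := hts5 _ (ex_intro2 _ _ x hx erefl).
  move: ht; rewrite -mws => /mapP [w hw ht].
  set y := x - w - l'.
  have hyL : L y by apply: hL.2; [apply: hL.2 => //; apply: wsL | apply: hLL].
  have hyZ : Z y by apply/piZ; rewrite !piB hl't ht subrr.
  have [r hr [hyr1 hyr2]] := hrs5 _ (conj hyL hyZ).
  exists (r + w); first by apply/allpairsP; exists (r, w).
  have -> : x - (r + w) = (y - r) + l' by rewrite /y (addrAC (x - w)) subrK opprD addrA addrAC.
  exact: subgrpD.
Qed.

End Exact.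

Section Haar.
Variables (R : realType) (K : fieldType) (abs : K -> R).
Hypothesis hK : nonarch_local_field abs.
Variable p : K.
Hypothesis hp : (0 < abs p < 1) /\ forall x, x != 0 -> exists z : int, abs x = abs p ^ z.
Variable rs : seq K.
Hypothesis hrs1 : forall y, y \in rs -> abs y <= 1.
Hypothesis hrs2 : forall x, abs x <= 1 -> exists y, y \in rs /\ abs (x - y) < 1.
Variable W : vectType K.
Local Notation ospan := (@ospan R K abs W).
Local Notation ospan0 := (ospan0 hK).
Local Notation ospanD := (ospanD hK).
Local Notation ospanZ := (ospanZ hK).
Local Notation ospanB := (ospanB hK).
Local Notation ospan_mem := (ospan_mem hK).
Local Notation ospan_sub := (ospan_sub hK).
Local Notation ospan_eq := (ospan_eq hK).

Lemma basis_scale (S : {vspace W}) b N : basis_of S b ->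
  basis_of S (map (fun x => p ^+ N *: x) b).
Proof.
move=> hb.
have c0 : p ^+ N != 0 by rewrite expf_neq0 // (p_neq0 hK hp).
have hs : <<map (fun x => p ^+ N *: x) b>>%VS = <<b>>%VS.
  apply/eqP; rewrite eqEsubv; apply/andP; split; apply/span_subvP => x.
    by move=> /mapP [y hy ->]; rewrite memvZ // memv_span.
  move=> hx; rewrite -[x](scalerK c0); rewrite memvZ // memv_span //.
  by apply: map_f.
rewrite /basis_of hs (span_basis hb) eqxx /=.
by move: (basis_free hb); rewrite /free hs size_map.
Qed.

Lemma lat_fin (S : {vspace W}) L L' : lattice abs S L -> lattice abs S L' ->
  exists n, lindex L L' n.
Proof.
move=> /latticeE [b [hb ->]] /latticeE [b' [hb' ->]].
apply: (fin_index hK hp hrs1 hrs2) => x hx; rewrite (span_basis hb').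
exact: basis_mem hb hx.
Qed.

Lemma lat_subgrp (S : {vspace W}) L : lattice abs S L -> subgrp L.
Proof. by move=> /latticeE [b [_ ->]]; apply: ospan_subgrp. Qed.

Lemma lat0 (S : {vspace W}) L : lattice abs S L -> L 0.
Proof. by move=> /lat_subgrp []. Qed.

Lemma meas_nz (S : {vspace W}) (mu : set W -> R[i]) :
  meas abs S mu -> mu <> mzero W -> forall L, lattice abs S L -> mu L != 0.
Proof.
move=> [hm0 hm] mu0 L hL.
have [L0 hL0] : exists L0, mu L0 != 0.
  case: (pselect (exists L0, mu L0 != 0)) => // hn; exfalso; apply: mu0.
  apply: funext => L0; case: (eqVneq (mu L0) 0) => // h; exfalso; apply: hn; by exists L0.
have lL0 : lattice abs S L0.
  by case: (pselect (lattice abs S L0)) => // hn; move: hL0; rewrite hm0 ?eqxx.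
move: (hL) (lL0) => /latticeE [b [hb eL]] /latticeE [b0 [hb0 eL0]].
have [N hN] : exists N, ospan (map (fun x => p ^+ N *: x) b) `<=` L0.
  rewrite eL0; apply: (comm_bound hK hp) => x hx.
  by rewrite (span_basis hb0); apply: basis_mem hb hx.
have l3 : lattice abs S (ospan (map (fun x => p ^+ N *: x) b)).
  by apply/latticeE; exists (map (fun x => p ^+ N *: x) b); split => //; apply: basis_scale.
have [n hn] := lat_fin lL0 l3.
have [n' hn'] := lat_fin hL l3.
have h3 : mu (ospan (map (fun x => p ^+ N *: x) b)) != 0.
  by move: hL0; rewrite (hm _ _ _ lL0 l3 hN hn); rewrite mulf_eq0 negb_or => /andP [].
rewrite (hm _ _ _ hL l3 _ hn'); last first.
  rewrite eL; apply: ospan_sub => x /mapP [y hy ->]; apply: ospanZ; first exact: (abspX_le1 hK hp).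
  exact: ospan_mem.
rewrite mulf_neq0 // pnatr_eq0 -lt0n.
exact: lindex_gt0 (lat0 hL) hn'.
Qed.

End Haar.

Section Core.
Variables (R : realType) (K : fieldType) (abs : K -> R).
Hypothesis hK : nonarch_local_field abs.
Variable p : K.
Hypothesis hp : (0 < abs p < 1) /\ forall x, x != 0 -> exists z : int, abs x = abs p ^ z.
Variable rs : seq K.
Hypothesis hrs1 : forall y, y \in rs -> abs y <= 1.
Hypothesis hrs2 : forall x, abs x <= 1 -> exists y, y \in rs /\ abs (x - y) < 1.
Variables (V : vectType K) (Ed : {vspace dual V}).
Local Notation Q := (subdual Ed).
Local Notation pi := (resE Ed).
Local Notation E0 := (annD Ed).
Local Notation E0s := [set v : V | v \in E0].
Local Notation ospanQ := (@ospan R K abs Q).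
Local Notation ospan := (@ospan R K abs V).
Local Notation ospan0 := (ospan0 hK).
Local Notation ospanD := (ospanD hK).
Local Notation ospanZ := (ospanZ hK).
Local Notation ospanB := (ospanB hK).
Local Notation ospan_mem := (ospan_mem hK).
Local Notation ospan_sub := (ospan_sub hK).
Local Notation ospan_eq := (ospan_eq hK).

Lemma struct_all (L : set V) : lattice abs (fullv : {vspace V}) L ->
  exists t r, [/\ basis_of fullv t, pi @` L = ospanQ t, basis_of E0 r & L `&` E0s = ospan r].
Proof.
move=> hL; have [u [r [h1 h2 ->]]] := lattice_struct hK Ed hL.
have [_ e1 e2] := lift_struct hK h1 erefl h2.
by exists (map pi u), r; split.
Qed.

Lemma lat_img L : lattice abs (fullv : {vspace V}) L -> lattice abs (fullv : {vspace Q}) (pi @` L).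
Proof. by move=> /struct_all [t [r [h1 -> _ _]]]; apply/latticeE; exists t. Qed.

Lemma lat_cap L : lattice abs (fullv : {vspace V}) L -> lattice abs E0 (L `&` E0s).
Proof. by move=> /struct_all [t [r [_ _ h2 ->]]]; apply/latticeE; exists r. Qed.

Lemma lift_gen (t : seq Q) (Pw : set V) (r : seq V) :
  basis_of fullv t -> basis_of E0 r ->
  (forall q, q \in t -> exists w, Pw w /\ pi w = q) ->
  exists u, [/\ forall w, w \in u -> Pw w, lattice abs (fullv : {vspace V}) (ospan (u ++ r)),
     pi @` ospan (u ++ r) = ospanQ t & ospan (u ++ r) `&` E0s = ospan r].
Proof.
move=> ht hr hl.
have [u [hu1 hu2]] := list_lift (P := fun w q => Pw w /\ pi w = q) hl.
have mu : map pi u = t.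
  apply: (@eq_from_nth _ 0); rewrite size_map // => j hj.
  by rewrite (nth_map 0) // (hu2 j 0 0 _).2 // -hu1.
have [e1 e2 e3] := lift_struct hK ht mu hr.
exists u; split => //.
  by move=> w /(nthP 0) [j hj <-]; apply: (hu2 j 0 0 _).1; rewrite -hu1.
by apply/latticeE; exists (u ++ r).
Qed.

Variables (rho : set V -> R[i]) (sigma : set V -> R[i]).
Hypothesis hrho : meas abs (fullv : {vspace V}) rho.
Hypothesis hsig : meas abs E0 sigma.
Hypothesis sig0 : sigma <> mzero V.

Definition fL (L : set V) := rho L / sigma (L `&` E0s).

Lemma sig_nz L : lattice abs (fullv : {vspace V}) L -> sigma (L `&` E0s) != 0.
Proof. by move=> hL; apply: (meas_nz hK hp hrs1 hrs2 hsig sig0); apply: lat_cap. Qed.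

Lemma pi_sub x y : pi (x - y) = pi x - pi y.
Proof. by rewrite -!(pihE Ed) linearB. Qed.

Lemma F1 L L' b : lattice abs (fullv : {vspace V}) L -> lattice abs (fullv : {vspace V}) L' ->
  L' `<=` L -> lindex (pi @` L) (pi @` L') b -> fL L = b%:R * fL L'.
Proof.
move=> hL hL' hsub hb.
have [a ha] := lat_fin hK hp hrs1 hrs2 (lat_cap hL) (lat_cap hL').
have hab : lindex L L' (a * b).
  apply: (exact_index (Z := E0s) (lat_subgrp hK hL) (lat_subgrp hK hL') hsub pi_sub) => //.
  by move=> v; rewrite /= memE0_pi; split => [->|/eqP].
have sub2 : L' `&` E0s `<=` L `&` E0s by move=> x [h1 h2]; split => //; apply: hsub.
rewrite /fL (hrho.2 _ _ _ hL hL' hsub hab) (hsig.2 _ _ _ (lat_cap hL) (lat_cap hL') sub2 ha).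
have a0 : a%:R != 0 :> R[i].
  by rewrite pnatr_eq0 -lt0n; apply: lindex_gt0 ha; apply: lat0 (lat_cap hL).
rewrite natrM invfM; have s0 := sig_nz hL'.
by field; apply/andP; split.
Qed.

Lemma F2 L1 L2 : lattice abs (fullv : {vspace V}) L1 -> lattice abs (fullv : {vspace V}) L2 ->
  pi @` L1 = pi @` L2 -> fL L1 = fL L2.
Proof.
move=> h1 h2 he.
move: (h1) (h2) => /latticeE [b1 [hb1 e1]] /latticeE [b2 [hb2 e2]].
have [N hN] : exists N, ospan (map (fun x => p ^+ N *: x) b1) `<=` L2.
  rewrite e2; apply: (comm_bound hK hp) => x hx.
  by rewrite (span_basis hb2); apply: basis_mem hb1 hx.
set L3 := ospan _ in hN.
have l3 : lattice abs (fullv : {vspace V}) L3.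
  by apply/latticeE; exists (map (fun x => p ^+ N *: x) b1); split => //; apply: (basis_scale hK hp).
have s31 : L3 `<=` L1.
  rewrite /L3 e1; apply: ospan_sub => x /mapP [y hy ->]; apply: ospanZ; first exact: (abspX_le1 hK hp).
  exact: ospan_mem.
have [n hn] := lat_fin hK hp hrs1 hrs2 (lat_img h1) (lat_img l3).
have hn2 : lindex (pi @` L2) (pi @` L3) n by rewrite -he.
by rewrite (F1 h1 l3 s31 hn) (F1 h2 l3 hN hn2).
Qed.

Definition chooseL (T : set Q) : set V :=
  epsilon (inhabits set0) (fun L => lattice abs (fullv : {vspace V}) L /\ pi @` L = T).

Definition tau (T : set Q) : R[i] :=
  if pselect (lattice abs (fullv : {vspace Q}) T) is left _ then fL (chooseL T) else 0.

Lemma chooseL_spec T : lattice abs (fullv : {vspace Q}) T ->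
  lattice abs (fullv : {vspace V}) (chooseL T) /\ pi @` (chooseL T) = T.
Proof.
move=> /latticeE [t [ht ->]]; rewrite /chooseL.
apply: (@epsilon_spec _ (inhabits (@set0 V)) (fun L => lattice abs (fullv : {vspace V}) L /\ pi @` L = ospanQ t)).
have hl0 : forall q, q \in t -> exists w, setT w /\ pi w = q.
  by move=> q _; have [w hw] := pi_onto q; exists w.
have [u [_ hl e2 _]] := lift_gen ht (vbasisP E0) hl0.
by exists (ospan (u ++ vbasis E0)).
Qed.

Lemma tau_lat L : lattice abs (fullv : {vspace V}) L -> tau (pi @` L) = fL L.
Proof.
move=> hL; rewrite /tau; case: pselect => [hT|]; last by move/(_ (lat_img hL)).
have [h1 h2] := chooseL_spec hT.
exact: F2.
Qed.

Lemma core_rel L : lattice abs (fullv : {vspace V}) L -> rho L = sigma (L `&` E0s) * tau (pi @` L).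
Proof. by move=> hL; rewrite tau_lat // /fL mulrC divfK // sig_nz. Qed.

Lemma tauE T : lattice abs (fullv : {vspace Q}) T -> tau T = fL (chooseL T).
Proof. by move=> hT; rewrite /tau; case: pselect. Qed.

Lemma tau_meas : meas abs (fullv : {vspace Q}) tau.
Proof.
split.
  by move=> T hT; rewrite /tau; case: pselect.
move=> T T' n hT hT' hsub hn.
have [hL e] := chooseL_spec hT.
move: (hT') => /latticeE [t' [ht' eT']].
have [_ [r [_ _ hr er]]] := struct_all hL.
have hl0 : forall q, q \in t' -> exists w, chooseL T w /\ pi w = q.
  move=> q hq; have : (pi @` chooseL T) q by rewrite e; apply: hsub; rewrite eT'; apply: ospan_mem hq.
  by case=> w hw <-; exists w.
have [u [hu hl' e2 e3]] := lift_gen ht' hr hl0.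
have hs : ospan (u ++ r) `<=` chooseL T.
  move: (hL) => /latticeE [b [hb eb]]; rewrite eb; apply: ospan_sub => x.
  rewrite mem_cat => /orP [hx|hx]; first by rewrite -eb; apply: hu.
  have : ospan r x by apply: ospan_mem.
  by rewrite -er -eb => -[].
have hn' : lindex (pi @` chooseL T) (pi @` ospan (u ++ r)) n by rewrite e e2 -eT'.
rewrite (tauE hT) (tauE hT') (F1 hL hl' hs hn'); congr (_ * _).
have [hL2 e4] := chooseL_spec hT'.
by apply: F2 => //; rewrite e4 e2.
Qed.

Lemma core_exists : exists tau : set Q -> R[i], meas abs (fullv : {vspace Q}) tau /\
  forall L, lattice abs (fullv : {vspace V}) L -> rho L = sigma (L `&` E0s) * tau (pi @` L).
Proof. by exists tau; split; [apply: tau_meas | apply: core_rel]. Qed.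

End Core.

Lemma aE_zero (R : realType) (K : fieldType) (abs : K -> R) (hK : nonarch_local_field abs)
  (V : vectType K) (Ed : {vspace dual V}) (rho : set V -> R[i]) :
  meas abs (fullv : {vspace V}) rho -> aE abs Ed (mzero (dual V)) rho = mzero V.
Proof.
move=> hrho.
have [p hp] := abs_disc hK.
have [rs [hrs1 hrs2]] := abs_res hK.
rewrite /aE /choose_fun.
set P := fun s : set V -> R[i] => _.
have Pm : P (mzero V).
  split.
    by split => // L L' n _ _ _ _; rewrite /mzero mulr0.
  move=> sigma tau L _ _ _ _ _; apply: funext => S.
  by rewrite /cscale /mzero !mul0r.
have hs := epsilon_spec (inhabits (fun _ : set V => 0 : R[i])) P (ex_intro _ _ Pm).
set s := epsilon _ _ in hs *.
case: (pselect (exists sigma, meas abs (annD Ed) sigma /\ sigma <> mzero V)).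
  move=> [sigma [hs1 hs2]].
  have [tau [ht1 ht2]] := core_exists hK hp hrs1 hrs2 hrho hs1 hs2.
  have hL : lattice abs Ed (ospan abs (vbasis Ed)).
    by apply/latticeE; exists (vbasis Ed); split => //; apply: vbasisP.
  rewrite (hs.2 sigma tau _ hs1 hs2 ht1 hL ht2).
  by apply: funext => S; rewrite /cscale /mzero !mul0r.
move=> hn; case: (pselect (s = mzero V)) => // hs0; exfalso.
by apply: hn; exists s; split => //; case: hs.
Qed.

Theorem proposition11p2 (R : realType) (K : fieldType) (abs : K -> R)
  (hK : nonarch_local_field abs)
  (X Y : vectType K) (F : 'Hom(X, Y)) (hF : lker F = 0%VS)
  (k : nat) (xi : {vspace X} -> (set X -> R[i]) -> set X -> R[i])
  (hxi : tsection abs k xi)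
  (E : {vspace Y})
  (hE : \dim E = (k + (\dim (fullv : {vspace Y}) - \dim (fullv : {vspace X})))%N)
  (hEX : (E + limg F)%VS != fullv) :
  forall rho : set Y -> R[i], meas abs (fullv : {vspace Y}) rho ->
    pushforward abs F k xi E rho = mzero Y.
Proof.
move=> rho hrho.
rewrite /pushforward /fourier; case: ifP => _ //.
rewrite /pullback; case: ifP => hdim; last exact: aE_zero.
exfalso.
have [g [g0 hg]] := annih_exists hEX.
have gE : g \in annV E.
  rewrite /annV memv_ker linfunE'; last first.
    by move=> a f1 f2; rewrite comp_lfunDl comp_lfunZl.
  apply/eqP/lfunP => y; rewrite comp_lfunE zero_lfunE; apply: hg.
  by apply: (subvP (addvSl E (limg F))); apply: memv_proj.
have gK : g \in lker (dualmap F).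
  rewrite memv_ker /dualmap linfunE'; last first.
    by move=> a f1 f2; rewrite comp_lfunDl comp_lfunZl.
  apply/eqP/lfunP => y; rewrite comp_lfunE zero_lfunE; apply: hg.
  by apply: (subvP (addvSr E (limg F))); apply: memv_img; apply: memvf.
have := limg_ker_dim (dualmap F) (annV E); rewrite (eqP hdim).
rewrite -{2}[\dim (annV E)]add0n => /addIn /eqP; rewrite dimv_eq0 => /eqP hc.
move/negP: g0; apply; rewrite -memv0 -hc memv_cap gE gK.
by [].
Qed.
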